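(* Let $t_1e_{\gamma_1},\dots,t_se_{\gamma_s}$ (with $t_i\in\mathbb{T}^n$, $\gamma_i\in\{1,\dots,r\}$) and $c_1,\dots,c_s\in K\setminus\{0\}$ be given, and let $\Sigma''$ be the set of critical syzygies obtained by applying Rules 1 and 2 below. Then the set $\widetilde{\Sigma}=\{-c_j\cdot\sigma_{ij}\mid \sigma_{ij}\in\Sigma''\}$ is the reduced $\tau$-Gröbner basis of the module $\mathrm{Syz}_P(c_1t_1e_{\gamma_1},\dots,c_st_se_{\gamma_s})$.
   Context: $K$ is a field, $P=K[x_1,\dots,x_n]$ is positively graded by $W\in\mathrm{Mat}_{m,n}(\mathbb{Z})$ (i.e. $\deg_W(x_1^{\alpha_1}\cdots x_n^{\alpha_n})=W\cdot(\alpha_1,\dots,\alpha_n)^{\mathrm{tr}}$, $\mathrm{rk}(W)=m$, no zero column, first non-zero entry of each column positive), $\mathbb{T}^n$ is the set of terms of $P$, $F=\bigoplus_{i=1}^rP(-\delta_i)$ has basis $e_1,\dots,e_r$, and $\sigma$ is a module term ordering on $\mathbb{T}^n\langle e_1,\dots,e_r\rangle$. Let $d_i=\deg_W(t_ie_{\gamma_i})=\deg_W(t_i)+\delta_{\gamma_i}$ and $F'=\bigoplus_{i=1}^sP(-d_i)$ with canonical basis $\epsilon_1,\dots,\epsilon_s$. $\mathrm{Syz}_P(c_1t_1e_{\gamma_1},\dots,c_st_se_{\gamma_s})$ is the submodule of $F'$ of all $\sum f_i\epsilon_i$ with $\sum f_ic_it_ie_{\gamma_i}=0$. The ordering $\tau$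 on $\mathbb{T}^n\langle\epsilon_1,\dots,\epsilon_s\rangle$ is defined by $t\epsilon_i\ge_\tau t'\epsilon_j$ iff $tt_ie_{\gamma_i}>_\sigma t't_je_{\gamma_j}$, or $tt_ie_{\gamma_i}=t't_je_{\gamma_j}$ and $i\ge j$; it is a module term ordering. For $i,j$ with $\gamma_i=\gamma_j$ let $\sigma_{ij}=\frac{\mathrm{lcm}(t_i,t_j)}{c_it_i}\epsilon_i-\frac{\mathrm{lcm}(t_i,t_j)}{c_jt_j}\epsilon_j$ and $t_{ij}=\mathrm{lcm}(t_i,t_j)/t_i$. $\Sigma=\{\sigma_{ij}\mid 1\le i<j\le s,\ \gamma_i=\gamma_j\}$ is the set of critical syzygies. Rule 1: delete from $\Sigma$ all $\sigma_{jk}$ for which there is an index $i\in\{1,\dots,j-1\}$ (with $\gamma_i=\gamma_k$) such that $t_{ki}$ divides $t_{kj}$; call the result $\Sigma'$. Rule 2: delete from $\Sigma'$ all $\sigma_{ik}$ for which there is an index $j\in\{i+1,\dots,k-1\}$ (with $\gamma_j=\gamma_k$) such that $t_{kj}$ properly divides $t_{ki}$; call the result $\Sigma''$. *)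

(* Defs.v *)
From HB Require Import structures.
From mathcomp Require Import all_boot all_order all_algebra.
From mathcomp Require Import mpoly.
Set Implicit Arguments. Unset Strict Implicit. Unset Printing Implicit Defensive.
Import GRing.Theory.
Local Open Scope ring_scope.

Section Defs.
Variable n : nat.

(* Terms of P = K[x_1..x_n] are identified with exponent vectors 'X_{1..n}.
   A module term t e_i of a free module with basis e_1..e_k is a pair (t, i). *)
Definition mterm (k : nat) := ('X_{1..n} * 'I_k)%type.

Definition tdiv (t t' : 'X_{1..n}) : Prop := forall l : 'I_n, (t l <= t' l)%N.

Definition tlcm (t t' : 'X_{1..n}) : 'X_{1..n} := [multinom maxn (t l) (t' l) | l < n].

Definition mtdiv k (x y : mterm k) : Prop := x.2 = y.2 /\ tdiv x.1 y.1.

Definition module_term_ordering k (le : mterm k -> mterm k -> Prop) : Prop :=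
  (forall x, le x x) /\
  [/\ (forall x y, le x y -> le y x -> x = y),
      (forall x y z, le x y -> le y z -> le x z),
      (forall x y, le x y \/ le y x),
      (forall (t : 'X_{1..n}) x y, le x y -> le ((t + x.1)%MM, x.2) ((t + y.1)%MM, y.2))
    & (forall (t : 'X_{1..n}) (i : 'I_k), le (0%MM, i) (t, i))].

Variable K : fieldType.
Variable s : nat.

Definition vec := {ffun 'I_s -> {mpoly K[n]}}.

Definition vsupp (v : vec) (x : mterm s) : Prop := x.1 \in msupp (v x.2).

Definition vcoef (v : vec) (x : mterm s) : K := (v x.2)@_x.1.

Definition is_LT (le : mterm s -> mterm s -> Prop) (v : vec) (x : mterm s) : Prop :=
  vsupp v x /\ forall y, vsupp v y -> le y x.

(* G is a le-Groebner basis of the submodule M of F': G is contained in M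
   and the leading terms of G generate the leading term module LT(M). *)
Definition groebner_basis (le : mterm s -> mterm s -> Prop) (M G : vec -> Prop) : Prop :=
  (forall g, G g -> M g) /\
  (forall v, M v -> v != 0 ->
     exists g x y, [/\ G g, is_LT le g x, is_LT le v y & mtdiv x y]).

(* reduced Groebner basis: Groebner basis, every element is nonzero and monic,
   the leading terms form a minimal system of generators of LT(M), and no term
   of g - LT(g) lies in LT(M) (i.e. is divisible by some LT(g')). *)
Definition reduced_groebner_basis (le : mterm s -> mterm s -> Prop) (M G : vec -> Prop) : Prop :=
  groebner_basis le M G /\
  forall g, G g ->
    exists x, [/\ is_LT le g x, vcoef g x = 1 &
      forall g' x' y, G g' -> is_LT le g' x' -> vsupp g y -> mtdiv x' y ->
        g' = g /\ y = x].

Variable r : nat.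
Variables (t : 'I_s -> 'X_{1..n}) (gamma : 'I_s -> 'I_r) (c : 'I_s -> K).

Definition syz (f : vec) : Prop :=
  forall k : 'I_r,
    \sum_(i < s | gamma i == k) f i * (c i *: 'X_[t i]) = 0.

Definition tau_ord (sigma : mterm r -> mterm r -> Prop) (x y : mterm s) : Prop :=
  let X := ((x.1 + t x.2)%MM, gamma x.2) in
  let Y := ((y.1 + t y.2)%MM, gamma y.2) in
  (sigma X Y /\ X <> Y) \/ (X = Y /\ (x.2 <= y.2)%N).

Definition crit_syz (i j : 'I_s) : vec :=
  [ffun k => (if k == i then (c i)^-1 *: 'X_[(tlcm (t i) (t j) - t i)%MM] else 0)
           - (if k == j then (c j)^-1 *: 'X_[(tlcm (t i) (t j) - t j)%MM] else 0)].

Definition tq (i j : 'I_s) : 'X_{1..n} := (tlcm (t i) (t j) - t i)%MM.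

Definition in_Sigma (i j : 'I_s) : Prop := (i < j)%N /\ gamma i = gamma j.

Definition rule1 (j k : 'I_s) : Prop :=
  exists i : 'I_s, [/\ (i < j)%N, gamma i = gamma k & tdiv (tq k i) (tq k j)].

Definition in_Sigma' (j k : 'I_s) : Prop := in_Sigma j k /\ ~ rule1 j k.

Definition rule2 (i k : 'I_s) : Prop :=
  exists j : 'I_s, [/\ (i < j)%N, (j < k)%N, gamma j = gamma k,
                      tdiv (tq k j) (tq k i) & tq k j <> tq k i].

Definition in_Sigma'' (i k : 'I_s) : Prop := in_Sigma' i k /\ ~ rule2 i k.

Definition Sigma_tilde (v : vec) : Prop :=
  exists i j : 'I_s, in_Sigma'' i j /\ v = (- c j) *: crit_syz i j.

End Defs.

(* Main.v *)
Require Import Defs.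
From mathcomp Require Import all_boot all_order all_algebra.
From mathcomp Require Import mpoly.
From mathcomp Require Import zify.
From Stdlib Require Import Classical.
Set Implicit Arguments. Unset Strict Implicit. Unset Printing Implicit Defensive.
Import GRing.Theory.
Local Open Scope ring_scope.

Lemma exists_max (T : eqType) (le : T -> T -> Prop)
  (tot : forall x y, le x y \/ le y x)
  (tr : forall x y z, le x y -> le y z -> le x z) (l : seq T) :
  l != [::] -> exists2 y, y \in l & forall z, z \in l -> le z y.
Proof.
elim: l => [//|a l IH] _.
case: (altP (l =P [::])) => [->|/IH [y yl Hy]].
  exists a; first by rewrite mem_seq1.
  by move=> z; rewrite mem_seq1 => /eqP ->; case: (tot a a).
case: (tot a y) => Hay.
  exists y; first by rewrite inE yl orbT.
  by move=> z; rewrite inE => /orP [/eqP ->|/Hy].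
exists a; first by rewrite inE eqxx.
by move=> z; rewrite inE => /orP [/eqP ->|/Hy Hz]; [case: (tot a a)|apply: tr Hz Hay].
Qed.

Lemma mdeg_tdiv n (a b : 'X_{1..n}) : tdiv a b -> (mdeg a <= mdeg b)%N.
Proof. by move=> H; rewrite !mdegE; apply: leq_sum => l _; apply: H. Qed.

Lemma mdeg_tdiv_lt n (a b : 'X_{1..n}) : tdiv a b -> a <> b -> (mdeg a < mdeg b)%N.
Proof.
move=> H Hne.
have [l Hl] : exists l, (a l < b l)%N.
  apply: NNPP => Hn; apply: Hne; apply/mnmP => l.
  apply/eqP; rewrite eqn_leq H /=; rewrite leqNgt; apply/negP => Hl; apply: Hn; by exists l.
rewrite !mdegE (bigD1 l) //= [X in (_ < X)%N](bigD1 l) //=.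
have : (\sum_(i < n | i != l) a i <= \sum_(i < n | i != l) b i)%N.
  by apply: leq_sum => i _; apply: H.
by move=> Hs; rewrite -addSn leq_add.
Qed.

Lemma tdiv_refl n (a : 'X_{1..n}) : tdiv a a.
Proof. by move=> l. Qed.

Lemma tdiv_trans n (a b d : 'X_{1..n}) : tdiv a b -> tdiv b d -> tdiv a d.
Proof. by move=> H1 H2 l; apply: leq_trans (H1 l) (H2 l). Qed.

Lemma coefMX n (K : fieldType) (p : {mpoly K[n]}) m M :
  (p * 'X_[m])@_M = if (m <= M)%MM then p@_(M - m) else 0.
Proof.
case: ifP => H.
  by rewrite -{1}(submK H) addmC mcoeffMX.
apply: memN_msupp_eq0; rewrite (perm_mem (msuppMX p m)).
apply/mapP => [[m' _ E]]; move: H; rewrite E => /negP; apply.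
by apply/mnm_lepP => l; rewrite mnmDE leq_addr.
Qed.

Section Main.
Variables (n : nat) (K : fieldType) (r s : nat)
  (sigma : mterm n r -> mterm n r -> Prop)
  (Hsigma : module_term_ordering sigma)
  (t : 'I_s -> 'X_{1..n}) (gamma : 'I_s -> 'I_r) (c : 'I_s -> K)
  (Hc : forall i, c i != 0).

Local Notation le := (tau_ord t gamma sigma).

Lemma tq_add i j : (tq t i j + t i)%MM = tlcm (t i) (t j).
Proof. by apply/mnmP => l; rewrite /tq /tlcm !(mnmDE, mnmBE, mnmE) subnK // leq_maxl. Qed.

Lemma tlcmC i j : tlcm (t i) (t j) = tlcm (t j) (t i).
Proof. by apply/mnmP => l; rewrite /tlcm !mnmE maxnC. Qed.

Lemma le_refl x : le x x.
Proof. by right; split. Qed.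

Lemma le_total x y : le x y \/ le y x.
Proof.
case: Hsigma => _ [_ _ tot _ _].
rewrite /tau_ord /=.
set X := ((x.1 + t x.2)%MM, gamma x.2); set Y := ((y.1 + t y.2)%MM, gamma y.2).
case: (X =P Y) => [E|NE].
  case: (leqP x.2 y.2) => H; [left|right]; right; split => //; exact: ltnW.
case: (tot X Y) => H; [left|right]; left; split => // E; apply: NE; by rewrite E.
Qed.

Lemma le_trans x y z : le x y -> le y z -> le x z.
Proof.
case: Hsigma => _ [anti tr _ _ _].
rewrite /tau_ord /=.
move=> [[H1 N1]|[E1 L1]] [[H2 N2]|[E2 L2]].
- left; split; first exact: tr H1 H2.
  move=> E; apply: N1; apply: anti H1 _; rewrite E; exact: H2.
- by left; rewrite -E2.
- by left; rewrite E1.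
- by right; rewrite E1 E2; split => //; apply: leq_trans L1 L2.
Qed.

Definition gt (i k : 'I_s) : vec n K s := (- c k) *: crit_syz t c i k.

Lemma gtE i k : i != k -> forall l, gt i k l =
  if l == k then 'X_[tq t k i] else if l == i then (- (c k / c i)) *: 'X_[tq t i k] else 0.
Proof.
move=> ik l; rewrite /gt /crit_syz !ffunE.
case: (eqVneq l k) => [->|lk].
  rewrite (eq_sym k i) (negbTE ik) sub0r scalerN scaleNr opprK.
  by rewrite scalerA mulrV ?unitfE ?Hc // scale1r /tq tlcmC.
rewrite subr0; case: ifP => _; last by rewrite scaler0.
by rewrite scalerA mulNr.
Qed.

Lemma msupp_sX (a : K) m m' : a != 0 -> (m' \in msupp (a *: 'X_[m] : {mpoly K[n]})) = (m' == m).
Proof. by move=> a0; rewrite (perm_mem (msuppZ _ a0)) msuppX mem_seq1. Qed.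

Lemma gt_supp i k y : i != k ->
  vsupp (gt i k) y <-> y = (tq t i k, i) \/ y = (tq t k i, k).
Proof.
move=> ik; case: y => m l; rewrite /vsupp /= gtE //.
have ck : - (c k / c i) != 0 by rewrite oppr_eq0 mulf_neq0 ?invr_eq0 ?Hc.
case: (eqVneq l k) => [->|lk].
  rewrite msuppX mem_seq1; split.
    by move/eqP => ->; right.
  by case=> [[_ E]|[->]]; [move: ik; rewrite E eqxx|].
case: (eqVneq l i) => [->|li].
  rewrite msupp_sX //; split; first by move/eqP => ->; left.
  by case=> [[->]|[_ E]]; [|move: ik; rewrite E eqxx].
rewrite msupp0 in_nil; split => //.
by case=> [[_ E]|[_ E]]; [move: li|move: lk]; rewrite E eqxx.
Qed.

Lemma gt_LT i k : in_Sigma gamma i k -> is_LT le (gt i k) (tq t k i, k).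
Proof.
move=> [ik gik]; have nik : i != k by rewrite neq_ltn ik.
split; first by apply/gt_supp => //; right.
move=> y /gt_supp -/(_ nik) [->|->]; last exact: le_refl.
right; rewrite /= tq_add tq_add tlcmC gik; split => //; exact: ltnW.
Qed.

Lemma gt_LT_uniq i k x : in_Sigma gamma i k -> is_LT le (gt i k) x -> x = (tq t k i, k).
Proof.
move=> [ik gik] [Hx Hmax]; have nik : i != k by rewrite neq_ltn ik.
case/(gt_supp _ nik): Hx => // Ex.
have := Hmax (tq t k i, k); rewrite Ex /tau_ord /= tq_add tq_add tlcmC gik.
case; first by apply/gt_supp => //; right.
  by case.
by case=> _; rewrite leqNgt ik.
Qed.

Lemma gt_coef i k : i != k -> vcoef (gt i k) (tq t k i, k) = 1.
Proof. by move=> ik; rewrite /vcoef /= gtE // eqxx mcoeffX eqxx. Qed.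

Lemma gt_syz i k : gamma i = gamma k -> i != k -> syz t gamma c (gt i k).
Proof.
move=> gik ik k0; rewrite big_mkcond (bigD1 k) //= (bigD1 i) //=.
rewrite big1 => [|l /andP [lk li]]; last by rewrite gtE // (negbTE lk) (negbTE li) mul0r if_same.
rewrite addr0 !gtE // eqxx (negbTE ik) eqxx gik.
case: ifP => _; last by rewrite addr0.
rewrite -!scalerAr -!scalerAl -!mpolyXD !scalerA addmC tq_add addmC tq_add tlcmC.
by rewrite mulrN mulrCA mulrV ?unitfE ?Hc // mulr1 scaleNr subrr.
Qed.

Lemma div_shift i' i k : tdiv (tq t i i') (tq t i k) -> tdiv (tq t k i') (tq t k i).
Proof.
move=> H l; have := H l; rewrite /tq /tlcm !(mnmBE, mnmE); lia.
Qed.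

Lemma kept (k : 'I_s) (N : nat) (i : 'I_s) : (i < k)%N -> gamma i = gamma k -> (mdeg (tq t k i) * s + i < N)%N ->
  exists i'', in_Sigma'' t gamma i'' k /\ tdiv (tq t k i'') (tq t k i).
Proof.
elim: N i => [//|N IH] i ik gik HN.
case: (classic (in_Sigma'' t gamma i k)) => Hin.
  by exists i; split => //; apply: tdiv_refl.
have : rule1 t gamma i k \/ rule2 t gamma i k.
  apply: NNPP => H; apply: Hin; split; first split.
  - by split.
  - by move=> H1; apply: H; left.
  - by move=> H1; apply: H; right.
case=> [[i0 [i0i gi0 d0]]|[j [ij jk gj dj nj]]].
- have := mdeg_tdiv d0 => Hd.
  have HB : (mdeg (tq t k i0) * s + i0 < N)%N.
    have := leq_mul Hd (leqnn s); lia.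
  have [i'' [H1 H2]] := IH i0 (ltn_trans i0i ik) gi0 HB.
  by exists i''; split => //; apply: tdiv_trans H2 d0.
- have := mdeg_tdiv_lt dj nj => Hd.
  have HB : (mdeg (tq t k j) * s + j < N)%N.
    have := leq_mul Hd (leqnn s); have := ltn_ord j; rewrite mulSn; lia.
  have [i'' [H1 H2]] := IH j jk gj HB.
  by exists i''; split => //; apply: tdiv_trans H2 dj.
Qed.

Lemma coefMZX (p : {mpoly K[n]}) a m M :
  (p * (a *: 'X_[m]))@_M = a * (if (m <= M)%MM then p@_(M - m) else 0).
Proof. by rewrite -scalerAr mcoeffZ coefMX. Qed.

Lemma GB_part (v : vec n K s) : syz t gamma c v -> v != 0 ->
  exists g x y, [/\ Sigma_tilde t gamma c g, is_LT le g x, is_LT le v y & mtdiv x y].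
Proof.
move=> Hv v0.
have [i0 vi0] : exists i, v i != 0.
  case: (pickP (fun i => v i != 0)) => [i Hi|H]; first by exists i.
  have E : v = 0 by apply/ffunP => i; rewrite ffunE; move/negbFE/eqP: (H i).
  by move: v0; rewrite E eqxx.
have [m0 Hm0] : exists m, m \in msupp (v i0).
  case E: (msupp (v i0)) => [|m0 l]; last by exists m0; rewrite inE eqxx.
  by move: vi0; rewrite -msupp_eq0 E.
pose l : seq (mterm n s) := [seq (m, i) | i <- enum 'I_s, m <- msupp (v i)].
have meml : forall y, (y \in l) <-> vsupp v y.
  move=> [m i]; split.
    by case/allpairsPdep => [i' [m' [_ Hm' [-> ->]]]].
  by move=> Hm; apply/allpairsPdep; exists i, m; rewrite mem_enum.
have lne : l != [::].
  by apply/eqP => E; have := (proj2 (meml (m0, i0)) Hm0); rewrite E.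
have [y yl ymax] := exists_max le_total le_trans lne.
have ysupp := proj1 (meml y) yl.
have ymax' : forall z, vsupp v z -> le z y by move=> z /meml; apply: ymax.
case: y yl ymax ysupp ymax' => m k /= _ _ ysupp ymax'.
have tkM : (t k <= m + t k)%MM by apply/mnm_lepP => l'; rewrite mnmDE leq_addl.
have [i Hi] : exists i, [&& i != k, gamma i == gamma k, (t i <= m + t k)%MM &
                        (v i)@_((m + t k) - t i) != 0].
  apply: NNPP => H.
  have := Hv (gamma k); move/(congr1 (mcoeff (m + t k)%MM)).
  rewrite mcoeff0 raddf_sum (bigD1 k) //= big1 => [|j /andP [gj jk]].
    rewrite addr0 coefMZX tkM addmK => /eqP.
    rewrite mulf_eq0 (negbTE (Hc k)) /= => /eqP E; move: ysupp.
    by rewrite /vsupp /=; apply/negP; rewrite -mcoeff_eq0 E.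
  rewrite coefMZX; case: ifP => tj; last by rewrite mulr0.
  case: (eqVneq ((v j)@_((m + t k) - t j)) 0) => [->|nz]; first by rewrite mulr0.
  by exfalso; apply: H; exists j; rewrite jk gj tj nz.
case/and4P: Hi => ik gik ti nz.
have suppi : vsupp v ((m + t k) - t i, i)%MM by rewrite /vsupp /=; apply/negPn; rewrite -mcoeff_eq0.
have ilk : (i < k)%N.
  have := ymax' _ suppi; rewrite /tau_ord /= submK //.
  case=> [[_ NE]|[_ L]]; first by exfalso; apply: NE; rewrite (eqP gik).
  by rewrite ltn_neqAle L andbT.
have hdiv : tdiv (tq t k i) m.
  move=> l'; move/mnm_lepP: ti => /(_ l'); rewrite /tq /tlcm !(mnmBE, mnmE, mnmDE); lia.
have [i'' [Hs'' Hd]] := kept (N := (mdeg (tq t k i) * s + i).+1) ilk (eqP gik) (leqnn _).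
exists (gt i'' k), (tq t k i'', k), (m, k); split.
- by exists i'', k; split.
- exact: gt_LT (proj1 (proj1 Hs'')).
- by split.
- by split => //=; apply: tdiv_trans Hd hdiv.
Qed.

Lemma red_part g : Sigma_tilde t gamma c g ->
    exists x, [/\ is_LT le g x, vcoef g x = 1 &
      forall g' x' y, Sigma_tilde t gamma c g' -> is_LT le g' x' -> vsupp g y -> mtdiv x' y ->
        g' = g /\ y = x].
Proof.
move=> [i [k [Hs ->]]]; have [[[ik gik] nr1] nr2] := Hs.
have nik : i != k by rewrite neq_ltn ik.
exists (tq t k i, k); split; [exact: (gt_LT (conj ik gik)) | exact: gt_coef nik |].
move=> g' x' y [i' [k' [Hs' ->]]] HLT' Hy [E2 Hd].
have Ex' := gt_LT_uniq (proj1 (proj1 Hs')) HLT'; subst x'.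
have [[[ik' gik'] nr1'] nr2'] := Hs'.
case/(gt_supp _ nik): Hy => Ey; subst y; simpl in E2, Hd; subst k'.
- exfalso; apply: nr1; exists i'; split => //; first by rewrite gik'.
  exact: div_shift.
- case: (ltngtP i' i) => [Hlt|Hgt|Heq].
  + by exfalso; apply: nr1; exists i'.
  + exfalso; case: (classic (tq t k i' = tq t k i)) => E.
      by apply: nr1'; exists i; split => //; rewrite E; apply: tdiv_refl.
    by apply: nr2; exists i'.
  + have Ei : i' = i by apply: val_inj.
    by subst i'.
Qed.

End Main.

Theorem proposition4p5 (n : nat) (K : fieldType) (r s : nat)
  (sigma : mterm n r -> mterm n r -> Prop)
  (Hsigma : module_term_ordering sigma)
  (t : 'I_s -> 'X_{1..n}) (gamma : 'I_s -> 'I_r) (c : 'I_s -> K)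
  (Hc : forall i, c i != 0) :
  reduced_groebner_basis (tau_ord t gamma sigma)
    (syz t gamma c) (Sigma_tilde t gamma c).
Proof.
split; last exact: red_part.
split; last exact: GB_part.
move=> g [i [k [[[[ik gik] _] _] ->]]].
by apply: gt_syz => //; rewrite neq_ltn ik.
Qed.
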